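(* Let $p,n$ be positive integers, $\lambda$ a partition of $n$ and $\mu\in\mathrm{Par}(n,p)$, such that $\lambda\in\mathrm{Par}(n,pq)$ for the values of $q$ considered. There is an integer $q_+$ with $1\le q_+\le n$ such that $(\bar\lambda,\bar\mu)\in\Gamma^{p,q}$ for every integer $q\ge q_+$.
   Context: $\mathrm{Par}(n,d)$ is the set of partitions of $n$ with at most $d$ rows. For a partition $\lambda$ of $n$, $\bar\lambda=(\lambda_1/n,\lambda_2/n,\dots)$, padded with zeros to the required length. $\Gamma^{p,q}$ is the set of pairs $(\mathrm{spec}(\rho_{AB}),\mathrm{spec}(\rho_A))$, where $\rho_{AB}$ ranges over density operators on $\mathbb{C}^p\otimes\mathbb{C}^q$, $\rho_A=\mathrm{tr}_B\rho_{AB}$, and spectra are non-increasingly ordered vectors in $\mathbb{R}^{pq}$ and $\mathbb{R}^p$. *)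

(* Defs.v *)
From HB Require Import structures.
From mathcomp Require Import all_boot all_order all_algebra.
From mathcomp Require Import complex.
From mathcomp Require Import Rstruct.
Set Implicit Arguments. Unset Strict Implicit. Unset Printing Implicit Defensive.
Import Order.TTheory GRing.Theory Num.Theory.
Local Open Scope ring_scope.

Notation RR := Rdefinitions.R.
Notation CC := (complex Rdefinitions.R).

Definition is_partition (n : nat) (l : seq nat) : bool :=
  [&& sorted geq l, all (fun x : nat => (0 < x)%N) l & (sumn l == n)%N].

Definition in_Par (n d : nat) (l : seq nat) : bool :=
  is_partition n l && (size l <= d)%N.

Definition bar (n d : nat) (l : seq nat) : 'rV[RR]_d :=
  \row_(i < d) ((nth 0%N l i)%:R / n%:R).

Definition adj_mx (m k : nat) (A : 'M[CC]_(m, k)) : 'M[CC]_(k, m) :=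
  (map_mx (fun z : CC => z^*) A)^T.

Definition density (N : nat) (rho : 'M[CC]_N) : Prop :=
  [/\ adj_mx rho = rho,
      (forall v : 'cV[CC]_N, 0 <= (adj_mx v *m rho *m v) 0 0)
    & \tr rho = 1].

(* partial trace over the second factor B of C^p (x) C^q;
   basis vector e_i (x) f_j has index mxvec_index i j *)
Definition ptraceB (p q : nat) (rho : 'M[CC]_(p * q)) : 'M[CC]_p :=
  \matrix_(i < p, i' < p) \sum_(j < q) rho (mxvec_index i j) (mxvec_index i' j).

Definition is_spec (N : nat) (A : 'M[CC]_N) (v : 'rV[RR]_N) : Prop :=
  char_poly A = \prod_(i < N) ('X - ((v 0 i)%:C%C)%:P)
  /\ (forall i j : 'I_N, (i <= j)%N -> v 0 j <= v 0 i).

Definition Gamma (p q : nat) (x : 'rV[RR]_(p * q)) (y : 'rV[RR]_p) : Prop :=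
  exists rho : 'M[CC]_(p * q),
    [/\ density rho, is_spec rho x & is_spec (ptraceB rho) y].
Arguments Gamma p q x y : clear implicits.

(* Main.v *)
Require Import Defs.
From HB Require Import structures.
From mathcomp Require Import all_boot all_order all_algebra.
From mathcomp Require Import complex Rstruct.
Set Implicit Arguments. Unset Strict Implicit. Unset Printing Implicit Defensive.
Import Order.TTheory GRing.Theory Num.Theory.
Local Open Scope ring_scope.

Lemma char_poly_mulC (R : idomainType) n (A B : 'M[R]_n) :
  char_poly (A *m B) = char_poly (B *m A).
Proof.
set A' := map_mx polyC A; set B' := map_mx polyC B.
set M := block_mx ('X%:M : 'M[{poly R}]_n) A' B' 1%:M.
have e1 : M *m block_mx 1%:M 0 (- B') 1%:M
          = block_mx (char_poly_mx (A *m B)) A' 0 1%:M.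
  rewrite mulmx_block /char_poly_mx map_mxM -/A' -/B'.
  by rewrite !mulmx1 !mulmx0 !add0r mulmxN mul1mx addrN.
have e2 : block_mx 1%:M 0 (- B') ('X%:M) *m M
          = block_mx ('X%:M) A' 0 (char_poly_mx (B *m A)).
  rewrite mulmx_block /char_poly_mx map_mxM -/A' -/B'.
  rewrite !mul1mx !mul0mx ?add0r ?addr0 mulmx1 mulNmx scalar_mxC addNr addrC.
  rewrite -mulNmx. congr block_mx.
have d1 := congr1 determinant e1; have d2 := congr1 determinant e2.
rewrite det_mulmx det_ublock det_lblock !det1 in d1.
rewrite det_mulmx det_ublock det_lblock !det1 det_scalar in d2.
apply: (@mulfI _ ('X ^+ n)); first by rewrite expf_neq0 // polyX_eq0.
rewrite /char_poly -d2. move: d1; rewrite !mulr1 !mul1r => <-. by rewrite mulrC.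
Qed.

Definition pk p q (k : 'I_(p * q)) : 'I_p * 'I_q :=
  enum_val (cast_ord (esym (mxvec_cast p q)) k).

Lemma pk_mx p q (i : 'I_p) (j : 'I_q) : pk (mxvec_index i j) = (i, j).
Proof. by rewrite /pk /mxvec_index cast_ordK enum_rankK. Qed.

Lemma sum_pq p q (F : 'I_(p * q) -> CC) :
  \sum_k F k = \sum_(i < p) \sum_(j < q) F (mxvec_index i j).
Proof.
rewrite pair_big /=.
rewrite (reindex (fun x : 'I_p * 'I_q => mxvec_index x.1 x.2)) //.
exists (@pk p q) => [[i j] _ | k _]; first by rewrite pk_mx.
by case/mxvec_indexP: k => i j; rewrite pk_mx.
Qed.

Lemma sum_nth_nat (s : seq nat) m : (size s <= m)%N ->
  (\sum_(i < m) nth 0 s i)%N = sumn s.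
Proof.
move=> hs; rewrite -(big_mkord xpredT (fun i => nth 0 s i)).
rewrite (@big_cat_nat _ _ _ (size s) 0 m _ _ (leq0n _) hs) /=.
rewrite [X in (_ + X)%N]big1_seq ?addn0.
  by rewrite sumnE [RHS](big_nth 0).
by move=> i /andP [_]; rewrite mem_index_iota => /andP [h _]; rewrite nth_default.
Qed.

Lemma size_le_sumn (s : seq nat) : all (fun x => 0 < x)%N s -> (size s <= sumn s)%N.
Proof.
elim: s => //= x s IH /andP [hx hs]; rewrite -add1n; exact: leq_add hx (IH hs).
Qed.

Lemma nth_sorted_geq (s : seq nat) (i j : nat) : sorted geq s -> (i <= j)%N ->
  (nth 0 s j <= nth 0 s i)%N.
Proof.
move=> ss hij; case: (ltnP j (size s)) => hj; last by rewrite nth_default.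
have hi : (i < size s)%N by apply: leq_ltn_trans hj.
have tr : transitive geq by move=> a b c /= h1 h2; apply: leq_trans h2 h1.
have rf : reflexive geq by move=> a /=.
have := sorted_leq_nth tr rf 0 ss; move=> /(_ i j); rewrite !inE; apply => //.
Qed.

Definition cc (n : nat) (s : seq nat) (l : nat) : CC := (nth 0 s l)%:R / n%:R.
Definition vv (n : nat) (s : seq nat) (i : nat) : CC := sqrtC (cc n s i).

Definition Xm (p q n : nat) (mu : seq nat) : 'M[CC]_(p * q) :=
  \matrix_(k, l) if ((l : nat) < q)%N && (((l + (pk k).1) %% q)%N == (pk k).2)
                 then vv n mu (pk k).1 else 0.
Definition Dm (p q n : nat) (lam : seq nat) : 'M[CC]_(p * q) :=
  diag_mx (\row_(l < p * q) cc n lam l).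
Definition rhoM p q n lam mu :=
  Xm p q n mu *m Dm p q n lam *m adj_mx (Xm p q n mu).

Lemma cc_ge0 n s l : 0 <= cc n s l.
Proof. by rewrite /cc divr_ge0 ?ler0n. Qed.

Lemma vv_ge0 n s l : 0 <= vv n s l.
Proof. by rewrite /vv sqrtC_ge0; apply: cc_ge0. Qed.

Lemma conj_ge0 (x : CC) : 0 <= x -> x^* = x.
Proof. by move=> h; apply: conj_Creal; apply: ger0_real. Qed.

Lemma vv2 n s i : vv n s i * vv n s i = cc n s i.
Proof. by rewrite -expr2 sqrtCK. Qed.

Lemma cc_out n s l : (size s <= l)%N -> cc n s l = 0.
Proof. by move=> h; rewrite /cc nth_default // mul0r. Qed.

Lemma vv_out n s l : (size s <= l)%N -> vv n s l = 0.
Proof. by move=> h; rewrite /vv cc_out // sqrtC0. Qed.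

Lemma adj_mul m k r (A : 'M[CC]_(m, k)) (B : 'M[CC]_(k, r)) :
  adj_mx (A *m B) = adj_mx B *m adj_mx A.
Proof.
apply/matrixP => i j; rewrite !mxE rmorph_sum; apply: eq_bigr => l _.
by rewrite !mxE rmorphM mulrC.
Qed.

Lemma adjK m k (A : 'M[CC]_(m, k)) : adj_mx (adj_mx A) = A.
Proof. by apply/matrixP => i j; rewrite !mxE conjCK. Qed.

Lemma adjX p q n mu : adj_mx (Xm p q n mu) = (Xm p q n mu)^T.
Proof.
apply/matrixP => a b; rewrite !mxE; case: ifP => _; last by rewrite conjC0.
by rewrite conj_ge0 // vv_ge0.
Qed.

Lemma adjD p q n lam : adj_mx (Dm p q n lam) = Dm p q n lam.
Proof.
apply/matrixP => a b; rewrite !mxE eq_sym; case: eqP => [->|_]; last by rewrite !mulr0n conjC0.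
by rewrite !mulr1n conj_ge0 //; apply: cc_ge0.
Qed.

Lemma sum_cc n s m : (0 < n)%N -> (size s <= m)%N -> sumn s = n ->
  \sum_(l < m) cc n s l = 1.
Proof.
move=> n0 hs hsum; rewrite /cc -mulr_suml -natr_sum sum_nth_nat // hsum.
by rewrite mulfV // pnatr_eq0 -lt0n.
Qed.

Lemma sum_ind q (x : nat) (F : 'I_q -> CC) (q0 : (0 < q)%N) :
  \sum_(j < q) (if (x %% q)%N == j then F j else 0) = F (Ordinal (ltn_pmod x q0)).
Proof.
rewrite (bigD1 (Ordinal (ltn_pmod x q0))) //= eqxx big1 ?addr0 // => j hj.
case: eqP => // e; case/eqP: hj; apply: val_inj => /=; by rewrite e.
Qed.

Lemma mod_addl_inj q a b c : (b < q)%N -> (c < q)%N ->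
  (((a + b) %% q)%N == ((a + c) %% q)%N) = (b == c).
Proof. by move=> hb hc; rewrite eqn_modDl !modn_small. Qed.

Lemma mod_addr_inj q a b c : (b < q)%N -> (c < q)%N ->
  (((b + a) %% q)%N == ((c + a) %% q)%N) = (b == c).
Proof. by move=> hb hc; rewrite ![(_ + a)%N]addnC mod_addl_inj. Qed.

Lemma XmE p q n mu (i : 'I_p) (j : 'I_q) l :
  Xm p q n mu (mxvec_index i j) l =
  if ((l : nat) < q)%N && (((l + i) %% q)%N == j) then vv n mu i else 0.
Proof. by rewrite mxE pk_mx. Qed.

Lemma keyD p q n lam mu : (0 < n)%N -> (0 < q)%N -> (size lam <= q)%N ->
  (size mu <= p)%N -> sumn mu = n ->
  Dm p q n lam *m (adj_mx (Xm p q n mu) *m Xm p q n mu) = Dm p q n lam.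
Proof.
move=> n0 q0 hlam hmu smu.
apply/matrixP => l l'; rewrite mul_diag_mx !mxE.
case: (ltnP l q) => hl; last by rewrite cc_out ?mul0r ?mul0rn //; apply: leq_trans hl.
rewrite adjX sum_pq.
have [e|ne] := eqVneq l l'.
  rewrite -e mulr1n -[RHS]mulr1; congr (_ * _).
  rewrite -(sum_cc (m:=p) n0 hmu smu); apply: eq_bigr => i _.
  under eq_bigr => j _ do rewrite !mxE pk_mx /= hl /=.
  rewrite -vv2.
  rewrite (eq_bigr (fun j : 'I_q => if ((l + i) %% q)%N == j then vv n mu i * vv n mu i else 0)).
    exact: (sum_ind _ _ q0).
  by move=> j _; case: ifP; rewrite ?mulr0.
rewrite (_ : _ *+ false = 0) //; apply/eqP; rewrite mulf_eq0; apply/orP; right; apply/eqP.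
apply: big1 => i _; apply: big1 => j _; rewrite !mxE pk_mx /= hl /=.
case: ifP => [/eqP h1|_]; last by rewrite mul0r.
case: ifP => [/andP [hl' /eqP h2]|_]; last by rewrite mulr0.
have : ((l + i) %% q)%N == ((l' + i) %% q)%N by rewrite h1 h2.
rewrite mod_addr_inj // => /eqP /val_inj el; by rewrite el eqxx in ne.
Qed.

Lemma rhoE p q n lam mu k k' : rhoM p q n lam mu k k' =
  \sum_l Xm p q n mu k l * cc n lam l * Xm p q n mu k' l.
Proof.
rewrite /rhoM adjX mxE; apply: eq_bigr => l _.
by rewrite mul_mx_diag !mxE.
Qed.

Lemma ptrace_rho p q n lam mu : (0 < n)%N -> (0 < q)%N -> (size lam <= q)%N ->
  (size lam <= p * q)%N -> sumn lam = n -> (size mu <= q)%N ->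
  ptraceB (rhoM p q n lam mu) = diag_mx (\row_(i < p) cc n mu i).
Proof.
move=> n0 q0 hlq hlpq slam hmq.
apply/matrixP => i i'; rewrite !mxE.
under eq_bigr => j _ do rewrite rhoE.
rewrite exchange_big /=.
have step : forall l : 'I_(p * q),
  \sum_(j < q) Xm p q n mu (mxvec_index i j) l * cc n lam l * Xm p q n mu (mxvec_index i' j) l
  = if ((l : nat) < q)%N && (((l + i) %% q)%N == ((l + i') %% q)%N)
    then vv n mu i * cc n lam l * vv n mu i' else 0.
  move=> l; under eq_bigr => j _ do rewrite !XmE.
  case: (ltnP l q) => hl /=; last by apply: big1 => j _; rewrite !mul0r.
  rewrite (eq_bigr (fun j : 'I_q => if ((l + i) %% q)%N == j then
     vv n mu i * cc n lam l * (if ((l + i') %% q)%N == j then vv n mu i' else 0) else 0)).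
    rewrite (sum_ind _ _ q0) /= eq_sym; case: ifP => _; by rewrite ?mulr0.
  by move=> j _; case: ifP => _; rewrite ?mul0r.
under eq_bigr => l _ do rewrite step.
have [e|ne] := eqVneq i i'.
  rewrite -e mulr1n -vv2.
  under eq_bigr => l _ do rewrite eqxx andbT.
  rewrite (eq_bigr (fun l : 'I_(p * q) => vv n mu i * vv n mu i * cc n lam l)).
    by rewrite -mulr_sumr (sum_cc n0 hlpq slam) mulr1.
  move=> l _; case: ifP => hl; first by rewrite mulrAC.
  by rewrite cc_out ?mulr0 //; apply: leq_trans hlq _; rewrite leqNgt hl.
rewrite (_ : _ *+ false = 0) //; apply: big1 => l _.
case: (ltnP i (size mu)) => hi; last by rewrite (vv_out _ hi) !mul0r; case: ifP.
case: (ltnP i' (size mu)) => hi'; last by rewrite (vv_out _ hi') !mulr0; case: ifP.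
rewrite mod_addl_inj ?(leq_trans hi) ?(leq_trans hi') //.
by rewrite val_eqE (negbTE ne) andbF.
Qed.

Lemma bar_C n d s (i : 'I_d) : ((bar n d s 0 i)%:C)%C = cc n s i.
Proof. by rewrite mxE /cc fmorph_div !rmorph_nat. Qed.

Lemma bar_mono n d s : sorted geq s ->
  forall i j : 'I_d, (i <= j)%N -> bar n d s 0 j <= bar n d s 0 i.
Proof.
move=> ss i j hij; rewrite !mxE ler_wpM2r ?invr_ge0 ?ler0n // ler_nat.
exact: nth_sorted_geq.
Qed.

Lemma spec_diag d (v : 'rV[RR]_d) (f : nat -> CC) :
  (forall i : 'I_d, ((v 0 i)%:C)%C = f i) ->
  char_poly (diag_mx (\row_(i < d) f i)) = \prod_(i < d) ('X - (((v 0 i)%:C)%C)%:P).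
Proof.
move=> hf; rewrite char_poly_trig ?diag_mx_is_trig //; apply: eq_bigr => i _.
by rewrite !mxE eqxx mulr1n hf.
Qed.

Lemma construct p q n lam mu : (0 < p)%N -> (0 < n)%N -> (n <= q)%N ->
  is_partition n lam -> in_Par n p mu ->
  Gamma p q (bar n (p * q) lam) (bar n p mu).
Proof.
move=> p0 n0 nq /and3P [slam plam /eqP sumlam] /andP [/and3P [smu pmu /eqP summu] szmu].
have q0 : (0 < q)%N by apply: leq_trans n0 nq.
have hlq : (size lam <= q)%N by apply: leq_trans (size_le_sumn plam) _; rewrite sumlam.
have hlpq : (size lam <= p * q)%N by apply: leq_trans hlq (leq_pmull q p0).
have hmq : (size mu <= q)%N by apply: leq_trans (size_le_sumn pmu) _; rewrite summu.
exists (rhoM p q n lam mu); split.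
- split.
  + by rewrite /rhoM !adj_mul adjK adjD mulmxA.
  + move=> w.
    have -> : adj_mx w *m rhoM p q n lam mu *m w =
      adj_mx (adj_mx (Xm p q n mu) *m w) *m Dm p q n lam *m (adj_mx (Xm p q n mu) *m w).
      by rewrite adj_mul adjK /rhoM !mulmxA.
    move: (adj_mx _ *m w) => u.
    rewrite mxE; apply: sumr_ge0 => l _; rewrite mul_mx_diag !mxE.
    rewrite mulrAC; apply: mulr_ge0; last by apply: cc_ge0.
    by rewrite mulrC; apply: mul_conjC_ge0.
  + rewrite /rhoM -mulmxA mxtrace_mulC -mulmxA keyD // mxtrace_diag.
    rewrite (eq_bigr (fun l : 'I_(p * q) => cc n lam l)) => [|l _]; last by rewrite mxE.
    exact: sum_cc.
- split.
  + rewrite /rhoM -mulmxA char_poly_mulC -mulmxA keyD //.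
    by apply: spec_diag => i; exact: bar_C.
  + exact: bar_mono.
- rewrite ptrace_rho //; split.
  + by apply: spec_diag => i; exact: bar_C.
  + exact: bar_mono.
Qed.

Theorem corollary1 (p n : nat) (lam mu : seq nat) :
  (0 < p)%N -> (0 < n)%N ->
  is_partition n lam -> in_Par n p mu ->
  exists qp : nat, (1 <= qp <= n)%N /\
    forall q : nat, (qp <= q)%N -> in_Par n (p * q) lam ->
      Gamma p q (bar n (p * q) lam) (bar n p mu).
Proof.
move=> p0 n0 hlam hmu; exists n; split; first by rewrite n0 leqnn.
by move=> q hq _; apply: construct.
Qed.
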